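(* Consider problem (VP) under the standing assumptions at $\bar x\in Q_0$. Let $\bar x$ be a local weak efficient solution of (VP) (in particular, a local efficient solution), let $u\in\mathcal{C}(\bar x)$, and suppose $L^2(Q;\bar x,u)\subset T^2(Q_0;\bar x,u)$. Then there is no $v\in X$ such that $f_i^{\circ}(\bar x,v)+f_i^{\circ\circ}(\bar x,u)<0$ for all $i\in I(\bar x;u)$ and $g_j^{\circ}(\bar x,v)+g_j^{\circ\circ}(\bar x,u)\leqq0$ for all $j\in J(\bar x;u)$.
   Context: Standing setting: $X$ is a Banach space; $I=\{1,\dots,p\}$, $J=\{1,\dots,m\}$; $f_i,g_j\colon X\to\mathbb{R}$; (VP) minimizes $f=(f_1,\dots,f_p)$ over $Q_0:=\{x\in X: g_j(x)\leqq 0,\ j\in J\}$. $J(\bar x):=\{j\in J: g_j(\bar x)=0\}$. Standing assumptions: $f_i$ ($i\in I$), $g_j$ ($j\in J(\bar x)$) locally Lipschitz at $\bar x$; $g_j$ ($j\notin J(\bar x)$) continuous at $\bar x$. $F^{\circ}(\bar x,u):=\limsup_{x\to\bar x,\,t\downarrow0}\frac{F(x+tu)-F(x)}{t}$; $F^{\circ\circ}(\bar x,u):=\limsup_{t\downarrow0}\frac{F(\bar x+tu)-F(\bar x)-tF^{\circ}(\bar x,u)}{\frac12t^2}$. $I(\bar x;u):=\{i\in I: f_i^{\circ}(\bar x,u)=0\}$, $J(\bar x;u):=\{j\in J(\bar x): g_j^{\circ}(\bar x,u)=0\}$. Lexicographic order on $\mathbb{R}^2$: $a\leqq_{\rm lex}b$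 iff $a_1<b_1$ or ($a_1=b_1$, $a_2\leqq b_2$). $F_i^2(\bar x;u,v):=(f_i^{\circ}(\bar x,u),\, f_i^{\circ}(\bar x,v)+f_i^{\circ\circ}(\bar x,u))$, $G_j^2(\bar x;u,v):=(g_j^{\circ}(\bar x,u),\, g_j^{\circ}(\bar x,v)+g_j^{\circ\circ}(\bar x,u))$. $Q:=Q_0\cap\{x: f_i(x)\leqq f_i(\bar x),\ i\in I\}$; $L^2(Q;\bar x,u):=\{v: F_i^2(\bar x;u,v)\leqq_{\rm lex}(0,0)\ \forall i\in I,\ G_j^2(\bar x;u,v)\leqq_{\rm lex}(0,0)\ \forall j\in J(\bar x)\}$. $T^2(\Omega;\bar x,u):=\{v: \exists t_k\downarrow0,\ \exists v^k\to v,\ \bar x+t_ku+\frac12t_k^2v^k\in\Omega\ \forall k\}$. Critical direction: $u$ with $f_i^{\circ}(\bar x,u)\leqq0$ for all $i$, $=0$ for some $i$, and $g_j^{\circ}(\bar x,u)\leqq0$ for all $j\in J(\bar x)$; $\mathcal{C}(\bar x)$ is the set of these. Local weak efficient solution: a neighborhood $U$ of $\bar x$ exists such that no $x\in U\cap Q_0$ has $f_i(x)<f_i(\bar x)$ for all $i\in I$. *)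

(* Defs.v *)
From Stdlib Require Import Reals Lra Classical ClassicalEpsilon.
Open Scope R_scope.

Record BanachSpace := {
  carrier :> Type;
  vzero : carrier;
  vadd : carrier -> carrier -> carrier;
  vopp : carrier -> carrier;
  vscal : R -> carrier -> carrier;
  vnorm : carrier -> R;
  vadd_comm : forall x y, vadd x y = vadd y x;
  vadd_assoc : forall x y z, vadd x (vadd y z) = vadd (vadd x y) z;
  vadd_zero : forall x, vadd x vzero = x;
  vadd_opp : forall x, vadd x (vopp x) = vzero;
  vscal_one : forall x, vscal 1 x = x;
  vscal_assoc : forall a b x, vscal a (vscal b x) = vscal (a * b) x;
  vscal_distr_r : forall a x y, vscal a (vadd x y) = vadd (vscal a x) (vscal a y);
  vscal_distr_l : forall a b x, vscal (a + b) x = vadd (vscal a x) (vscal b x);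
  vnorm_nonneg : forall x, 0 <= vnorm x;
  vnorm_eq0 : forall x, vnorm x = 0 -> x = vzero;
  vnorm_scal : forall a x, vnorm (vscal a x) = Rabs a * vnorm x;
  vnorm_triangle : forall x y, vnorm (vadd x y) <= vnorm x + vnorm y;
  vcomplete : forall s : nat -> carrier,
      (forall eps, eps > 0 -> exists N, forall n k, (n >= N)%nat -> (k >= N)%nat ->
          vnorm (vadd (s n) (vopp (s k))) < eps) ->
      exists l, forall eps, eps > 0 -> exists N, forall n, (n >= N)%nat ->
          vnorm (vadd (s n) (vopp l)) < eps
}.

Arguments vzero {_}. Arguments vadd {_}. Arguments vopp {_}.
Arguments vscal {_}. Arguments vnorm {_}.

Definition vdist {X : BanachSpace} (x y : X) : R := vnorm (vadd x (vopp y)).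

Inductive Rbar := Fin (r : R) | PInf | MInf.

Definition Rbar_lt (a b : Rbar) : Prop :=
  match a, b with
  | Fin x, Fin y => x < y
  | MInf, Fin _ | MInf, PInf | Fin _, PInf => True
  | _, _ => False
  end.
Definition Rbar_le (a b : Rbar) : Prop := Rbar_lt a b \/ a = b.

(* convention PInf + MInf = PInf (never used under the standing assumptions) *)
Definition Rbar_plus (a b : Rbar) : Rbar :=
  match a, b with
  | Fin x, Fin y => Fin (x + y)
  | PInf, _ | _, PInf => PInf
  | _, _ => MInf
  end.
Definition Rbar_opp (a : Rbar) : Rbar :=
  match a with Fin x => Fin (- x) | PInf => MInf | MInf => PInf end.
(* real part; only applied to quantities that are finite under the standing
   assumptions *)
Definition Rbar_real (a : Rbar) : R := match a with Fin x => x | _ => 0 end.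

Definition sup_R (S : R -> Prop) : Rbar :=
  match excluded_middle_informative (exists x, S x) with
  | right _ => MInf
  | left Hne =>
      match excluded_middle_informative (bound S) with
      | right _ => PInf
      | left Hb => Fin (proj1_sig (completeness S Hb Hne))
      end
  end.
Definition Rbar_sup (P : Rbar -> Prop) : Rbar :=
  match excluded_middle_informative (P PInf) with
  | left _ => PInf
  | right _ => sup_R (fun r => P (Fin r))
  end.
Definition Rbar_inf (P : Rbar -> Prop) : Rbar :=
  Rbar_opp (Rbar_sup (fun y => P (Rbar_opp y))).

(* F°(xb,u) = limsup_{x -> xb, t ↓ 0} (F(x+tu)-F(x))/t
            = inf_{d>0} sup { (F(x+tu)-F(x))/t : ||x-xb|| < d, 0 < t < d } *)
Definition clarke {X : BanachSpace} (F : X -> R) (xb u : X) : Rbar :=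
  Rbar_inf (fun y => exists d, d > 0 /\
    y = sup_R (fun q => exists x t, vdist x xb < d /\ 0 < t < d /\
                  q = (F (vadd x (vscal t u)) - F x) / t)).

(* F°°(xb,u) = limsup_{t ↓ 0} (F(xb+tu)-F(xb)-t F°(xb,u)) / (t^2/2) *)
Definition clarke2 {X : BanachSpace} (F : X -> R) (xb u : X) : Rbar :=
  Rbar_inf (fun y => exists d, d > 0 /\
    y = sup_R (fun q => exists t, 0 < t < d /\
          q = (F (vadd xb (vscal t u)) - F xb - t * Rbar_real (clarke F xb u))
              / (t ^ 2 / 2))).

Definition loc_lipschitz_at {X : BanachSpace} (F : X -> R) (xb : X) : Prop :=
  exists K d, d > 0 /\ forall x y, vdist x xb < d -> vdist y xb < d ->
    Rabs (F x - F y) <= K * vdist x y.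
Definition continuous_at {X : BanachSpace} (F : X -> R) (xb : X) : Prop :=
  forall eps, eps > 0 -> exists d, d > 0 /\
    forall x, vdist x xb < d -> Rabs (F x - F xb) < eps.

Definition inI (p i : nat) : Prop := (1 <= i <= p)%nat.
Definition inJ (m j : nat) : Prop := (1 <= j <= m)%nat.

Definition Q0 {X : BanachSpace} (m : nat) (g : nat -> X -> R) (x : X) : Prop :=
  forall j, inJ m j -> g j x <= 0.
Definition active {X : BanachSpace} (m : nat) (g : nat -> X -> R) (xb : X) (j : nat) : Prop :=
  inJ m j /\ g j xb = 0.
Definition Qset {X : BanachSpace} (p m : nat) (f g : nat -> X -> R) (xb x : X) : Prop :=
  Q0 m g x /\ forall i, inI p i -> f i x <= f i xb.

Definition Iu {X : BanachSpace} (p : nat) (f : nat -> X -> R) (xb u : X) (i : nat) : Prop :=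
  inI p i /\ clarke (f i) xb u = Fin 0.
Definition Ju {X : BanachSpace} (m : nat) (g : nat -> X -> R) (xb u : X) (j : nat) : Prop :=
  active m g xb j /\ clarke (g j) xb u = Fin 0.

Definition lex_le (a b : Rbar * Rbar) : Prop :=
  Rbar_lt (fst a) (fst b) \/ (fst a = fst b /\ Rbar_le (snd a) (snd b)).

Definition second_order {X : BanachSpace} (F : X -> R) (xb u v : X) : Rbar * Rbar :=
  (clarke F xb u, Rbar_plus (clarke F xb v) (clarke2 F xb u)).

Definition L2 {X : BanachSpace} (p m : nat) (f g : nat -> X -> R) (xb u v : X) : Prop :=
  (forall i, inI p i -> lex_le (second_order (f i) xb u v) (Fin 0, Fin 0)) /\
  (forall j, active m g xb j -> lex_le (second_order (g j) xb u v) (Fin 0, Fin 0)).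

Definition T2 {X : BanachSpace} (Om : X -> Prop) (xb u v : X) : Prop :=
  exists (t : nat -> R) (vk : nat -> X),
    (forall k, t k > 0) /\ Un_cv t 0 /\
    (forall eps, eps > 0 -> exists N, forall k, (k >= N)%nat -> vdist (vk k) v < eps) /\
    (forall k, Om (vadd (vadd xb (vscal (t k) u)) (vscal (t k ^ 2 / 2) (vk k)))).

Definition critical_dir {X : BanachSpace} (p m : nat) (f g : nat -> X -> R) (xb u : X) : Prop :=
  (forall i, inI p i -> Rbar_le (clarke (f i) xb u) (Fin 0)) /\
  (exists i, inI p i /\ clarke (f i) xb u = Fin 0) /\
  (forall j, active m g xb j -> Rbar_le (clarke (g j) xb u) (Fin 0)).

Definition local_weak_efficient {X : BanachSpace} (p m : nat) (f g : nat -> X -> R) (xb : X) : Prop :=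
  exists d, d > 0 /\ ~ exists x, vdist x xb < d /\ Q0 m g x /\
     forall i, inI p i -> f i x < f i xb.

(* Main.v *)
Require Import Defs.
From Stdlib Require Import Reals Lra Lia Classical ClassicalEpsilon.
Open Scope R_scope.

Section V.
Variable X : BanachSpace.

Lemma v0l (x : X) : vadd vzero x = x.
Proof. rewrite vadd_comm; apply vadd_zero. Qed.

Lemma vopp_uniq (x y : X) : vadd x y = vzero -> y = vopp x.
Proof.
  intro H. rewrite <- (vadd_zero _ y), <- (vadd_opp _ x), vadd_assoc,
    (vadd_comm _ y x), H. apply v0l.
Qed.

Lemma vscal0 (x : X) : vscal 0 x = vzero.
Proof.
  assert (H : vscal 0 x = vadd (vscal 0 x) (vscal 0 x)).
  { rewrite <- vscal_distr_l. f_equal. ring. }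
  set (a := vscal 0 x) in *.
  transitivity (vadd a (vadd a (vopp a))).
  - rewrite vadd_opp, vadd_zero; reflexivity.
  - rewrite vadd_assoc, <- H. apply vadd_opp.
Qed.

Lemma vnorm0 : vnorm (@vzero X) = 0.
Proof. rewrite <- (vscal0 vzero), vnorm_scal, Rabs_R0. ring. Qed.

Lemma vopp_scal (x : X) : vopp x = vscal (-1) x.
Proof.
  symmetry; apply vopp_uniq. rewrite <- (vscal_one _ x) at 1.
  rewrite <- vscal_distr_l. replace (1 + -1) with 0 by ring. apply vscal0.
Qed.

Lemma vswap (a b c d : X) : vadd (vadd a b) (vadd c d) = vadd (vadd a c) (vadd b d).
Proof.
  rewrite !vadd_assoc. f_equal. rewrite <- !vadd_assoc. f_equal. apply vadd_comm.
Qed.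

Lemma vopp_add (a b : X) : vopp (vadd a b) = vadd (vopp a) (vopp b).
Proof.
  symmetry; apply vopp_uniq. rewrite vswap, !vadd_opp. apply vadd_zero.
Qed.

Lemma vdist_self (x : X) : vdist x x = 0.
Proof. unfold vdist. rewrite vadd_opp. apply vnorm0. Qed.

Lemma vdist_add (y w : X) : vdist (vadd y w) y = vnorm w.
Proof.
  unfold vdist. f_equal. rewrite (vadd_comm _ y w), <- vadd_assoc, vadd_opp.
  apply vadd_zero.
Qed.

Lemma vdist_add2 (y a b : X) : vdist (vadd (vadd y a) b) y <= vnorm a + vnorm b.
Proof.
  rewrite <- vadd_assoc, vdist_add. apply vnorm_triangle.
Qed.

Lemma vdist_scal (y a b : X) s :
  vdist (vadd y (vscal s a)) (vadd y (vscal s b)) = Rabs s * vdist a b.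
Proof.
  unfold vdist. rewrite <- vnorm_scal. f_equal.
  rewrite vopp_add, vswap, vadd_opp, v0l, vscal_distr_r. f_equal.
  rewrite !vopp_scal, !vscal_assoc. f_equal. ring.
Qed.

Lemma vnorm_le (a b : X) : vnorm a <= vdist a b + vnorm b.
Proof.
  unfold vdist. eapply Rle_trans; [|apply vnorm_triangle].
  right. f_equal. rewrite <- vadd_assoc, (vadd_comm _ (vopp b)), vadd_opp, vadd_zero.
  reflexivity.
Qed.

End V.

Lemma sup_lt (S : R -> Prop) r : Rbar_lt (sup_R S) (Fin r) -> forall q, S q -> q < r.
Proof.
  unfold sup_R. destruct (excluded_middle_informative (exists x, S x)) as [Hne|Hne].
  - destruct (excluded_middle_informative (bound S)) as [Hb|Hb].
    + destruct (completeness S Hb Hne) as [s Hs]. simpl. destruct Hs as [Hub _]. intros H q Hq.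
      specialize (Hub q Hq). lra.
    + simpl. tauto.
  - intros _ q Hq. exfalso; apply Hne; eauto.
Qed.

Lemma inf_lt (P : Rbar -> Prop) r :
  Rbar_lt (Rbar_inf P) (Fin r) -> exists y, P y /\ Rbar_lt y (Fin r).
Proof.
  unfold Rbar_inf, Rbar_sup.
  destruct (excluded_middle_informative (P (Rbar_opp PInf))) as [HP|HP].
  - intros _. exists MInf. split; [exact HP|simpl; exact I].
  - unfold sup_R.
    destruct (excluded_middle_informative (exists x, P (Rbar_opp (Fin x)))) as [Hne|Hne].
    + destruct (excluded_middle_informative (bound (fun x => P (Rbar_opp (Fin x))))) as [Hb|Hb].
      * destruct (completeness _ Hb Hne) as [s Hs]. simpl. destruct Hs as [Hub Hl]. intro H.
        apply NNPP; intro Hn. assert (s <= - r); [|lra].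
        apply Hl. intros z Hz. apply Rnot_lt_le; intro Hz2. apply Hn.
        exists (Fin (- z)). split; [exact Hz|simpl; lra].
      * intros _. apply NNPP; intro Hn. apply Hb. exists (- r).
        intros z Hz. apply Rnot_lt_le; intro Hz2. apply Hn.
        exists (Fin (- z)). split; [exact Hz|simpl; lra].
    + simpl. tauto.
Qed.

Lemma clarke_lt {X : BanachSpace} (F : X -> R) xb u r :
  Rbar_lt (clarke F xb u) (Fin r) -> exists d, d > 0 /\
   forall x t, vdist x xb < d -> 0 < t < d -> (F (vadd x (vscal t u)) - F x) / t < r.
Proof.
  intro H. apply inf_lt in H. destruct H as [y [[d [Hd ->]] Hy]].
  exists d; split; auto. intros x t Hx Ht. eapply sup_lt; [exact Hy|]. exists x, t; auto.
Qed.

Lemma clarke2_lt {X : BanachSpace} (F : X -> R) xb u r :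
  Rbar_lt (clarke2 F xb u) (Fin r) -> exists d, d > 0 /\
   forall t, 0 < t < d ->
   (F (vadd xb (vscal t u)) - F xb - t * Rbar_real (clarke F xb u)) / (t ^ 2 / 2) < r.
Proof.
  intro H. apply inf_lt in H. destruct H as [y [[d [Hd ->]] Hy]].
  exists d; split; auto. intros t Ht. eapply sup_lt; [exact Hy|]. exists t; auto.
Qed.

Lemma plus_lt a b : Rbar_lt (Rbar_plus a b) (Fin 0) ->
  exists al be, Rbar_lt a (Fin al) /\ Rbar_lt b (Fin be) /\ al + be < 0.
Proof.
  destruct a as [a| |], b as [b| |]; simpl; try tauto; intro H.
  - exists (a - (a+b)/3), (b - (a+b)/3). simpl; repeat split; lra.
  - exists (a+1), (-a-2). simpl; repeat split; lra.
  - exists (-b-2), (b+1). simpl; repeat split; lra.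
  - exists (-1), (-1). simpl; repeat split; lra.
Qed.

Lemma fin_ev p (P : nat -> nat -> Prop) :
  (forall i, inI p i -> exists N, forall k, (k >= N)%nat -> P i k) ->
  exists N, forall i, inI p i -> forall k, (k >= N)%nat -> P i k.
Proof.
  induction p as [|p IH]; intro H.
  - exists 0%nat. unfold inI; intros; lia.
  - destruct IH as [N1 HN1].
    { intros i Hi. apply H. unfold inI in *; lia. }
    destruct (H (S p)) as [N2 HN2]. { unfold inI; lia. }
    exists (max N1 N2). intros i Hi k Hk.
    destruct (Nat.eq_dec i (S p)) as [->|Hne].
    + apply HN2; lia.
    + apply HN1; unfold inI in *; lia.
Qed.

Lemma div_lt a s r : s > 0 -> a / s < r -> a < r * s.
Proof.
  intros Hs H. apply (Rmult_lt_compat_r s) in H; auto.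
  unfold Rdiv in H. rewrite Rmult_assoc, Rinv_l in H; lra.
Qed.

Lemma lip_pos {X : BanachSpace} (F : X -> R) xb : loc_lipschitz_at F xb ->
  exists K d, 0 <= K /\ d > 0 /\ forall x y, vdist x xb < d -> vdist y xb < d ->
    F x - F y <= K * vdist x y.
Proof.
  intros [K0 [d [Hd H]]]. exists (Rabs K0), d. split; [apply Rabs_pos|split; auto].
  intros x y Hx Hy. specialize (H x y Hx Hy).
  assert (0 <= vdist x y) by apply vnorm_nonneg.
  pose proof (Rle_abs K0). pose proof (Rle_abs (F x - F y)). nra.
Qed.

Lemma ev_seq {X : BanachSpace} (t : nat -> R) (vk : nat -> X) v :
  Un_cv t 0 ->
  (forall eps, eps > 0 -> exists N, forall k, (k >= N)%nat -> vdist (vk k) v < eps) ->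
  forall de et, de > 0 -> et > 0 ->
  exists N, forall k, (k >= N)%nat -> t k < de /\ vdist (vk k) v < et.
Proof.
  intros Ht Hv de et Hde Het. destruct (Ht de Hde) as [N1 H1].
  destruct (Hv et Het) as [N2 H2]. exists (max N1 N2). intros k Hk. split.
  - specialize (H1 k ltac:(lia)). unfold R_dist in H1. rewrite Rminus_0_r in H1.
    pose proof (Rle_abs (t k)). lra.
  - apply H2; lia.
Qed.

Lemma case1 {X : BanachSpace} (F : X -> R) xb u c K dL d1 (t : R) (w : X) :
  c < 0 -> 0 <= K ->
  (forall x y, vdist x xb < dL -> vdist y xb < dL -> F x - F y <= K * vdist x y) ->
  (forall x t, vdist x xb < d1 -> 0 < t < d1 -> (F (vadd x (vscal t u)) - F x) / t < c) ->
  0 < t -> t < 1 -> t < d1 -> t * (vnorm u + vnorm w) < dL -> t * K * vnorm w < - c ->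
  F (vadd (vadd xb (vscal t u)) (vscal (t ^ 2 / 2) w)) < F xb.
Proof.
  intros Hc HK Hlip Hcl Ht0 Ht1 Htd HtL HtK.
  set (y := vadd xb (vscal t u)).
  assert (Hs : Rabs (t ^ 2 / 2) = t ^ 2 / 2) by (apply Rabs_right; nra).
  assert (Htt : Rabs t = t) by (apply Rabs_right; lra).
  pose proof (vnorm_nonneg _ u) as Hnu. pose proof (vnorm_nonneg _ w) as Hnw.
  assert (H1 : F y - F xb < c * t).
  { apply div_lt; [lra|]. apply Hcl; [rewrite vdist_self; lra|lra]. }
  assert (Hy : vdist y xb < dL).
  { unfold y; rewrite vdist_add, vnorm_scal, Htt.
    assert (0 <= t * vnorm w) by (apply Rmult_le_pos; lra). nra. }
  assert (Hx : vdist (vadd y (vscal (t ^ 2 / 2) w)) xb < dL).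
  { unfold y. eapply Rle_lt_trans; [apply vdist_add2|].
    rewrite !vnorm_scal, Htt, Hs.
    assert (t ^ 2 / 2 * vnorm w <= t * vnorm w) by (apply Rmult_le_compat_r; nra).
    nra. }
  assert (H2 := Hlip _ _ Hx Hy). rewrite vdist_add, vnorm_scal, Hs in H2.
  fold y. nra.
Qed.

Lemma case2 {X : BanachSpace} (F : X -> R) xb u v al be K dL d1 d2 (t : R) (w : X) :
  clarke F xb u = Fin 0 -> 0 <= K ->
  (forall x y, vdist x xb < dL -> vdist y xb < dL -> F x - F y <= K * vdist x y) ->
  (forall x t, vdist x xb < d1 -> 0 < t < d1 -> (F (vadd x (vscal t v)) - F x) / t < al) ->
  (forall t, 0 < t < d2 ->
   (F (vadd xb (vscal t u)) - F xb - t * Rbar_real (clarke F xb u)) / (t ^ 2 / 2) < be) ->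
  0 < t -> t < 1 -> t < d1 -> t < d2 -> t * vnorm u < d1 ->
  t * (vnorm u + vnorm w) < dL -> t * (vnorm u + vnorm v) < dL ->
  K * vdist w v < - (al + be) ->
  F (vadd (vadd xb (vscal t u)) (vscal (t ^ 2 / 2) w)) < F xb.
Proof.
  intros H0 HK Hlip Hcl Hcl2 Ht0 Ht1 Htd1 Htd2 HtU HtL HtL' HtK.
  rewrite H0 in Hcl2. simpl in Hcl2.
  set (y := vadd xb (vscal t u)). set (s := t ^ 2 / 2).
  assert (Hs0 : 0 < s) by (unfold s; nra).
  assert (Hst : s < t) by (unfold s; nra).
  assert (Hs : Rabs s = s) by (apply Rabs_right; lra).
  assert (Htt : Rabs t = t) by (apply Rabs_right; lra).
  pose proof (vnorm_nonneg _ u) as Hnu. pose proof (vnorm_nonneg _ w) as Hnw.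
  pose proof (vnorm_nonneg _ v) as Hnv. pose proof (vnorm_nonneg _ (vadd w (vopp v))) as Hnd.
  assert (H1 : F y - F xb < be * s).
  { apply div_lt; [lra|]. replace (F y - F xb) with (F y - F xb - t * 0) by ring.
    apply Hcl2; lra. }
  assert (H2 : F (vadd y (vscal s v)) - F y < al * s).
  { apply div_lt; [lra|]. apply Hcl; [|lra].
    unfold y; rewrite vdist_add, vnorm_scal, Htt. lra. }
  assert (Hx : vdist (vadd y (vscal s w)) xb < dL).
  { unfold y. eapply Rle_lt_trans; [apply vdist_add2|].
    rewrite !vnorm_scal, Htt, Hs.
    assert (s * vnorm w <= t * vnorm w) by (apply Rmult_le_compat_r; nra). nra. }
  assert (Hx' : vdist (vadd y (vscal s v)) xb < dL).
  { unfold y. eapply Rle_lt_trans; [apply vdist_add2|].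
    rewrite !vnorm_scal, Htt, Hs.
    assert (s * vnorm v <= t * vnorm v) by (apply Rmult_le_compat_r; nra). nra. }
  assert (H3 := Hlip _ _ Hx Hx'). rewrite vdist_scal, Hs in H3.
  fold y s. unfold vdist in *. nra.
Qed.

Lemma lt_min t a b : t < Rmin a b -> t < a /\ t < b.
Proof. intro H. pose proof (Rmin_l a b). pose proof (Rmin_r a b). lra. Qed.

Lemma lt_div t a b : b > 0 -> t < a / b -> t * b < a.
Proof. intros Hb H. apply (Rmult_lt_compat_r b) in H; auto.
  unfold Rdiv in H. rewrite Rmult_assoc, Rinv_l in H; lra. Qed.

Lemma min_pos a b : a > 0 -> b > 0 -> Rmin a b > 0.
Proof. intros. unfold Rmin; destruct (Rle_dec a b); lra. Qed.

Lemma lt0_c a : Rbar_lt a (Fin 0) -> exists c, c < 0 /\ Rbar_lt a (Fin c).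
Proof.
  destruct a as [a| |]; simpl; try tauto; intro H.
  - exists (a/2). split; simpl; lra.
  - exists (-1). split; simpl; lra.
Qed.

Lemma ev_one {X : BanachSpace} (F : X -> R) xb u v (t : nat -> R) (vk : nat -> X) :
  loc_lipschitz_at F xb ->
  (Rbar_lt (clarke F xb u) (Fin 0) \/
   (clarke F xb u = Fin 0 /\
    Rbar_lt (Rbar_plus (clarke F xb v) (clarke2 F xb u)) (Fin 0))) ->
  (forall k, t k > 0) -> Un_cv t 0 ->
  (forall eps, eps > 0 -> exists N, forall k, (k >= N)%nat -> vdist (vk k) v < eps) ->
  exists N, forall k, (k >= N)%nat ->
    F (vadd (vadd xb (vscal (t k) u)) (vscal (t k ^ 2 / 2) (vk k))) < F xb.
Proof.
  intros HL Hc Ht Htc Hvk.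
  destruct (lip_pos F xb HL) as [K [dL [HK [HdL Hlip]]]].
  pose proof (vnorm_nonneg _ u) as Hnu. pose proof (vnorm_nonneg _ v) as Hnv.
  set (U := vnorm u) in *. set (M := vnorm v + 1).
  destruct Hc as [Hc|[H0 Hc]].
  - destruct (lt0_c _ Hc) as [c [Hc0 Hcc]].
    destruct (clarke_lt F xb u c Hcc) as [d1 [Hd1 Hcl]].
    assert (HKM : K * M + 1 > 0) by (unfold M; nra).
    destruct (ev_seq t vk v Htc Hvk
      (Rmin 1 (Rmin d1 (Rmin (dL / (U + M + 1)) (- c / (K * M + 1))))) 1)
      as [N HN].
    { repeat apply min_pos; try lra; apply Rdiv_lt_0_compat; unfold M in *; lra. }
    { lra. }
    exists N. intros k Hk. destruct (HN k Hk) as [Htk Hv].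
    apply lt_min in Htk as [Ht1 Htk]. apply lt_min in Htk as [Ht2 Htk].
    apply lt_min in Htk as [Ht3 Ht4].
    apply lt_div in Ht3; [|unfold M in *; lra]. apply lt_div in Ht4; [|lra].
    pose proof (vnorm_le _ (vk k) v) as Hw. pose proof (vnorm_nonneg _ (vk k)).
    pose proof (Ht k).
    apply (case1 F xb u c K dL d1); auto; fold U; try lra.
    + unfold M in *. nra.
    + assert (K * vnorm (vk k) <= K * M) by (apply Rmult_le_compat_l; unfold M; lra).
      nra.
  - destruct (plus_lt _ _ Hc) as [al [be [Hal [Hbe Hab]]]].
    destruct (clarke_lt F xb v al Hal) as [d1 [Hd1 Hcl]].
    destruct (clarke2_lt F xb u be Hbe) as [d2 [Hd2 Hcl2]].
    destruct (ev_seq t vk v Htc Hvk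
      (Rmin 1 (Rmin d1 (Rmin d2 (Rmin (d1 / (U + 1)) (dL / (U + M + 1))))))
      (Rmin 1 (- (al + be) / (K + 1)))) as [N HN].
    { repeat apply min_pos; try lra; apply Rdiv_lt_0_compat; unfold M in *; lra. }
    { apply min_pos; [lra|]. apply Rdiv_lt_0_compat; lra. }
    exists N. intros k Hk. destruct (HN k Hk) as [Htk Hv].
    apply lt_min in Htk as [Ht1 Htk]. apply lt_min in Htk as [Ht2 Htk].
    apply lt_min in Htk as [Ht3 Htk]. apply lt_min in Htk as [Ht4 Ht5].
    apply lt_div in Ht4; [|lra]. apply lt_div in Ht5; [|unfold M in *; lra].
    apply lt_min in Hv as [Hv1 Hv2]. apply lt_div in Hv2; [|lra].
    pose proof (vnorm_le _ (vk k) v) as Hw. pose proof (vnorm_nonneg _ (vk k)).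
    pose proof (vnorm_nonneg _ (vadd (vk k) (vopp v))) as Hd.
    pose proof (Ht k).
    apply (case2 F xb u v al be K dL d1 d2); auto; fold U; try lra.
    + assert (t k * vnorm (vk k) <= t k * M) by (apply Rmult_le_compat_l; unfold M; lra).
      unfold M in *. nra.
    + unfold M in *. nra.
    + unfold vdist in *. nra.
Qed.

Lemma ev_dist {X : BanachSpace} xb u v (t : nat -> R) (vk : nat -> X) r :
  r > 0 -> (forall k, t k > 0) -> Un_cv t 0 ->
  (forall eps, eps > 0 -> exists N, forall k, (k >= N)%nat -> vdist (vk k) v < eps) ->
  exists N, forall k, (k >= N)%nat ->
    vdist (vadd (vadd xb (vscal (t k) u)) (vscal (t k ^ 2 / 2) (vk k))) xb < r.
Proof.
  intros Hr Ht Htc Hvk.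
  pose proof (vnorm_nonneg _ u) as Hnu. pose proof (vnorm_nonneg _ v) as Hnv.
  destruct (ev_seq t vk v Htc Hvk (Rmin 1 (r / (vnorm u + vnorm v + 2))) 1) as [N HN].
  { apply min_pos; [lra|]. apply Rdiv_lt_0_compat; lra. } { lra. }
  exists N. intros k Hk. destruct (HN k Hk) as [Htk Hv].
  apply lt_min in Htk as [Ht1 Ht2]. apply lt_div in Ht2; [|lra].
  pose proof (vnorm_le _ (vk k) v) as Hw. pose proof (vnorm_nonneg _ (vk k)).
  pose proof (Ht k).
  eapply Rle_lt_trans; [apply vdist_add2|]. rewrite !vnorm_scal.
  rewrite (Rabs_right (t k)) by lra. rewrite (Rabs_right (t k ^ 2 / 2)) by nra.
  assert (t k ^ 2 / 2 * vnorm (vk k) <= t k * vnorm (vk k)) by (apply Rmult_le_compat_r; nra).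
  nra.
Qed.

Theorem corollary4p3 (X : BanachSpace) (p m : nat) (f g : nat -> X -> R) (xb : X)
  (Hf : forall i, inI p i -> loc_lipschitz_at (f i) xb)
  (Hga : forall j, active m g xb j -> loc_lipschitz_at (g j) xb)
  (Hgn : forall j, inJ m j -> ~ active m g xb j -> continuous_at (g j) xb)
  (Hxb : Q0 m g xb)
  (Hsol : local_weak_efficient p m f g xb)
  (u : X) (Hu : critical_dir p m f g xb u)
  (Hincl : forall v, L2 p m f g xb u v -> T2 (Q0 m g) xb u v) :
  ~ exists v : X,
      (forall i, Iu p f xb u i ->
         Rbar_lt (Rbar_plus (clarke (f i) xb v) (clarke2 (f i) xb u)) (Fin 0)) /\
      (forall j, Ju m g xb u j ->
         Rbar_le (Rbar_plus (clarke (g j) xb v) (clarke2 (g j) xb u)) (Fin 0)).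
Proof.
  intros [v [Hv1 Hv2]].
  destruct Hu as [Hu1 [_ Hu3]].
  assert (HL2 : L2 p m f g xb u v).
  { split.
    - intros i Hi. unfold lex_le, second_order; simpl.
      destruct (Hu1 i Hi) as [Hl|He]; [left; exact Hl|].
      right; split; [exact He|]. left; apply Hv1; split; auto.
    - intros j Hj. unfold lex_le, second_order; simpl.
      destruct (Hu3 j Hj) as [Hl|He]; [left; exact Hl|].
      right; split; [exact He|]. apply Hv2; split; auto. }
  destruct (Hincl v HL2) as [t [vk [Ht [Htc [Hvk HQ]]]]].
  destruct Hsol as [dsol [Hdsol Hno]]. apply Hno.
  destruct (ev_dist xb u v t vk dsol Hdsol Ht Htc Hvk) as [N0 HN0].
  destruct (fin_ev p (fun i k =>
     f i (vadd (vadd xb (vscal (t k) u)) (vscal (t k ^ 2 / 2) (vk k))) < f i xb))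
    as [N1 HN1].
  { intros i Hi. apply (ev_one (f i) xb u v); auto.
    destruct (Hu1 i Hi) as [Hl|He]; [left; exact Hl|].
    right; split; [exact He|]. apply Hv1; split; auto. }
  exists (vadd (vadd xb (vscal (t (max N0 N1)) u))
            (vscal (t (max N0 N1) ^ 2 / 2) (vk (max N0 N1)))).
  split; [apply HN0; lia|]. split; [apply HQ|].
  intros i Hi. apply HN1; auto; lia.
Qed.
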